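(* Let $k\ge 0$ and let $G=L_k$, of order $n=4k+6$. Then (a) $\gamma_t(G)=(n+2)/2$. Moreover, if $k\ge1$ and $w\in\{v_1,v_2,v_3\}$ (the three subdivision vertices on the path $a_1v_1v_2v_3c_1$), then (b) $\gamma_t(G-w)=n/2$ and (c) $\gamma_t^a(G;w)=n/2$.
   Context: For a graph $G$ with no isolated vertex, a total dominating set (TD-set) is a set $S\subseteq V(G)$ such that every vertex of $G$ is adjacent to some vertex of $S$; $\gamma_t(G)$ is the minimum cardinality of a TD-set. For a vertex $v$ of $G$, an almost total dominating set (ATD-set) of $G$ with respect to $v$ is a set $S\subseteq V(G)$ with $v\in S$ such that every vertex different from $v$ is adjacent to a vertex of $S$ and $v$ has no neighbor in $S$; $\gamma_t^a(G;v)$ is its minimum cardinality. For $k\ge 1$, $G_k$ is the graph with vertex set $\{a_i,b_i,c_i,d_i:1\le i\le k\}$ whose edges are: the edges of the path $a_1b_1a_2b_2\cdots a_kb_k$, the edges of the path $c_1d_1c_2d_2\cdots c_kd_k$, the edges $a_id_i$ and $b_ic_i$ for every $1\le i\le k$, and the two edges $a_1c_1$ and $b_kd_k$. $F_k$ ($k\ge1$) is obtained from $G_k$ by replacing the edge $a_1c_1$ by a path $a_1v_1v_2v_3c_1$ through three new vertices $v_1,v_2,v_3$. $L_0=C_6$, and for $k\ge1$, $L_k$ is obtained from $F_k$ by replacing the edge $b_kd_k$ by a path $b_ku_1u_2u_3d_k$ through three new vertices $u_1,u_2,u_3$. *)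

(* Defs.v *)
From mathcomp Require Import all_boot.
Set Implicit Arguments. Unset Strict Implicit. Unset Printing Implicit Defensive.

Section Dom.
Variable T : finType.

Definition is_TD_in (e : rel T) (D S : {set T}) : bool :=
  (S \subset D) && [forall x in D, [exists y in S, e x y]].

(* gamma_t of the induced subgraph on D: minimum size of a TD-set.
   (Default #|T|.+1 if no TD-set exists; never used for graphs without
   isolated vertices.) *)
Definition gamma_t_in (e : rel T) (D : {set T}) : nat :=
  \big[minn/#|T|.+1]_(S : {set T} | is_TD_in e D S) #|S|.

Definition gamma_t (e : rel T) : nat := gamma_t_in e [set: T].

Definition is_ATD (e : rel T) (v : T) (S : {set T}) : bool :=
  [&& v \in S,
      [forall x, (x != v) ==> [exists y in S, e x y]] &
      [forall y in S, ~~ e v y]].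

Definition gamma_ta (e : rel T) (v : T) : nat :=
  \big[minn/#|T|.+1]_(S : {set T} | is_ATD e v S) #|S|.
End Dom.

(* Vertices: inl (i, p) with i : 'I_k (0-based index i <-> paper's i+1) and
   p = 0,1,2,3 standing for a_i, b_i, c_i, d_i;
   inr r with r = 0,1,2 standing for v_1,v_2,v_3 and r = 3,4,5 for u_1,u_2,u_3.
   For k = 0 only the six inr vertices exist and they form the cycle C_6. *)
Definition Lvert (k : nat) : finType := ('I_k * 'I_4 + 'I_6)%type.

Definition Larc (k : nat) (x y : Lvert k) : bool :=
  match x, y with
  | inl (i, p), inl (j, q) =>
      [|| [&& p == 0 :> nat, q == 1 :> nat & i == j :> nat]      (* a_i b_i *)
        , [&& p == 1 :> nat, q == 0 :> nat & j == i.+1 :> nat]   (* b_i a_{i+1} *)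
        , [&& p == 2 :> nat, q == 3 :> nat & i == j :> nat]      (* c_i d_i *)
        , [&& p == 3 :> nat, q == 2 :> nat & j == i.+1 :> nat]   (* d_i c_{i+1} *)
        , [&& p == 0 :> nat, q == 3 :> nat & i == j :> nat]      (* a_i d_i *)
        | [&& p == 1 :> nat, q == 2 :> nat & i == j :> nat] ]    (* b_i c_i *)
  | inl (i, p), inr r =>
      [|| [&& p == 0 :> nat, i == 0 :> nat & r == 0 :> nat]      (* a_1 v_1 *)
        , [&& p == 2 :> nat, i == 0 :> nat & r == 2 :> nat]      (* c_1 v_3 *)
        , [&& p == 1 :> nat, i == k.-1 :> nat & r == 3 :> nat]   (* b_k u_1 *)
        | [&& p == 3 :> nat, i == k.-1 :> nat & r == 5 :> nat] ] (* d_k u_3 *)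
  | inr r, inr s =>
      [|| (r == 0 :> nat) && (s == 1 :> nat)                     (* v_1 v_2 *)
        , (r == 1 :> nat) && (s == 2 :> nat)                     (* v_2 v_3 *)
        , (r == 3 :> nat) && (s == 4 :> nat)                     (* u_1 u_2 *)
        , (r == 4 :> nat) && (s == 5 :> nat)                     (* u_2 u_3 *)
        | (k == 0) && (((r == 2 :> nat) && (s == 3 :> nat))
                       || ((r == 5 :> nat) && (s == 0 :> nat))) ] (* close C_6 *)
  | inr _, inl _ => false
  end.

Definition Ladj (k : nat) : rel (Lvert k) := fun x y => Larc x y || Larc y x.

(* the subdivision vertex v_j (j = 1,2,3 <-> j : 'I_3 = 0,1,2) *)
Definition Lv (k : nat) (j : 'I_3) : Lvert k :=
  inr (widen_ord (isT : 3 <= 6) j).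

(* Main.v *)
Require Import Defs.
From mathcomp Require Import all_boot zify.
Set Implicit Arguments. Unset Strict Implicit. Unset Printing Implicit Defensive.

Notation P0 := (@Ordinal 4 0 isT).
Notation P1 := (@Ordinal 4 1 isT).
Notation P2 := (@Ordinal 4 2 isT).
Notation P3 := (@Ordinal 4 3 isT).
Notation R0 := (@Ordinal 6 0 isT).
Notation R1 := (@Ordinal 6 1 isT).
Notation R2 := (@Ordinal 6 2 isT).
Notation R3 := (@Ordinal 6 3 isT).
Notation R4 := (@Ordinal 6 4 isT).
Notation R5 := (@Ordinal 6 5 isT).

Definition ind k (S : {set Lvert k}) (p : 'I_4) (i : nat) : bool :=
  [exists j : 'I_k, (nat_of_ord j == i) && (inl (j,p) \in S)].

Lemma indE k (S : {set Lvert k}) p (j : 'I_k) : ind S p j = (inl (j,p) \in S).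
Proof.
apply/existsP/idP => [[j' /andP [/eqP /val_inj -> //]]|H]; by exists j; rewrite eqxx.
Qed.

Lemma indI k (S : {set Lvert k}) p (j : 'I_k) : inl (j,p) \in S -> ind S p j.
Proof. by rewrite indE. Qed.

Lemma sum4 (F : 'I_4 -> nat) : \sum_j F j = F P0 + F P1 + F P2 + F P3.
Proof.
rewrite !big_ord_recl big_ord0 addn0 !addnA.
by congr (F _ + F _ + F _ + F _); apply/val_inj.
Qed.

Lemma sum6 (F : 'I_6 -> nat) : \sum_j F j = F R0 + F R1 + F R2 + F R3 + F R4 + F R5.
Proof.
rewrite !big_ord_recl big_ord0 addn0 !addnA.
by congr (F _ + F _ + F _ + F _ + F _ + F _); apply/val_inj.
Qed.

Lemma card_dec k (S : {set Lvert k}) : #|S| =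
  \sum_(i < k) (ind S P0 i + ind S P1 i + ind S P2 i + ind S P3 i)
  + (inr R0 \in S) + (inr R1 \in S) + (inr R2 \in S) + (inr R3 \in S)
  + (inr R4 \in S) + (inr R5 \in S).
Proof.
rewrite -sum1_card big_mkcond /= big_sumType /=.
have -> : \sum_(p : 'I_k * 'I_4) (if inl p \in S then 1 else 0) =
   \sum_i \sum_j nat_of_bool (inl (i,j) \in S).
  by rewrite pair_bigA; apply: eq_bigr => [[i j]] _; case: (_ \in S).
rewrite sum6 !addnA; congr (_ + _ + _ + _ + _ + _ + _); try by case: (_ \in S).
apply: eq_bigr => i _; by rewrite sum4 !indE.
Qed.

Lemma bigmin_le (T : eqType) (r : seq T) (P : pred T) (f : T -> nat) d s0 :
  s0 \in r -> P s0 -> \big[minn/d]_(s <- r | P s) f s <= f s0.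
Proof.
elim: r => // x r IH; rewrite inE big_cons => /orP [/eqP <-|H] Ps0.
  by rewrite Ps0 geq_minl.
case: (P x); last exact: IH.
by rewrite geq_min IH ?orbT.
Qed.

Lemma bigmin_eq (T : finType) (P : pred T) (f : T -> nat) d m s0 :
  P s0 -> f s0 = m -> m <= d -> (forall s, P s -> m <= f s) ->
  \big[minn/d]_(s | P s) f s = m.
Proof.
move=> Ps0 fs0 md H; apply/eqP; rewrite eqn_leq; apply/andP; split.
  by rewrite -fs0; apply: bigmin_le; rewrite ?mem_index_enum.
by elim/big_ind: _ => // x y; rewrite leq_min => -> ->.
Qed.

Lemma ord4P (q : 'I_4) : [\/ q = P0, q = P1, q = P2 | q = P3].
Proof.
case: q => [[|[|[|[|q]]]] Hq] //;
  [apply: Or41|apply: Or42|apply: Or43|apply: Or44]; exact: val_inj.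
Qed.

Lemma ord6P (q : 'I_6) : q = R0 \/ q = R1 \/ q = R2 \/ q = R3 \/ q = R4 \/ q = R5.
Proof.
case: q => [[|[|[|[|[|[|q]]]]]] Hq] //;
  [left|right;left|do 2 right;left|do 3 right; left|do 4 right; left|do 5 right]; exact: val_inj.
Qed.

Ltac fin F :=
  repeat match goal with
  | H : is_true false |- _ => discriminate H
  | H : is_true (?a == ?a) |- _ => clear H
  | H : is_true (_ || _) |- _ => case/orP: H => H
  | H : is_true (_ && _) |- _ => let H2 := fresh "H" in case/andP: H => H H2
  | H : is_true (?a == ?b) |- _ => (move/eqP: H => H; subst a) || (move/eqP: H => H; subst b) || (rewrite H; clear H)
  end; by rewrite /= ?F ?eqxx ?orbT ?andbT.

Ltac nbl j :=
  let y := fresh "y" in let yS := fresh "yS" in let H := fresh "H" in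
  let j' := fresh "j'" in let q := fresh "q" in let r := fresh "r" in
  let F := fresh "F" in let a := fresh "a" in let b := fresh "b" in
  case/existsP => y /andP [yS H]; case: y yS H => [[j' q]|r] yS H;
  [ case: (ord4P q) yS H => -> yS H; have F := indI yS; rewrite /Ladj /= in H;
    move: F H; move: (nat_of_ord j') (nat_of_ord j) => a b F H; fin F
  | case: (ord6P r) yS H => [->|[->|[->|[->|[->|->]]]]] F H; rewrite /Ladj /= in H;
    move: F H; move: (nat_of_ord j) => b F H; fin F ].

Lemma nbA k (S : {set Lvert k}) (j : 'I_k) :
  [exists y in S, Ladj (inl (j,P0)) y] ->
  [|| ind S P1 j, ind S P3 j, (0 < j) && ind S P1 j.-1 | (j == 0 :> nat) && (inr R0 \in S)].
Proof. nbl j. Qed.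

Ltac nbr :=
  let y := fresh "y" in let yS := fresh "yS" in let H := fresh "H" in
  let j' := fresh "j'" in let q := fresh "q" in let r := fresh "r" in
  let F := fresh "F" in let a := fresh "a" in
  case/existsP => y /andP [yS H]; case: y yS H => [[j' q]|r] yS H;
  [ case: (ord4P q) yS H => -> yS H; have F := indI yS; rewrite /Ladj /= in H;
    move: F H; move: (nat_of_ord j') => a F H; fin F
  | case: (ord6P r) yS H => [->|[->|[->|[->|[->|->]]]]] F H; rewrite /Ladj /= in H;
    move: F H => F H; fin F ].

Lemma nbC k (S : {set Lvert k}) (j : 'I_k) :
  [exists y in S, Ladj (inl (j,P2)) y] ->
  [|| ind S P1 j, ind S P3 j, (0 < j) && ind S P3 j.-1 | (j == 0 :> nat) && (inr R2 \in S)].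
Proof. nbl j. Qed.
Lemma nbB k (S : {set Lvert k}) (j : 'I_k) :
  [exists y in S, Ladj (inl (j,P1)) y] ->
  [|| ind S P0 j, ind S P2 j, ind S P0 j.+1 | (j == k.-1 :> nat) && (inr R3 \in S)].
Proof. nbl j. Qed.
Lemma nbD k (S : {set Lvert k}) (j : 'I_k) :
  [exists y in S, Ladj (inl (j,P3)) y] ->
  [|| ind S P0 j, ind S P2 j, ind S P2 j.+1 | (j == k.-1 :> nat) && (inr R5 \in S)].
Proof. nbl j. Qed.
Lemma nbV1 k (S : {set Lvert k}) :
  [exists y in S, Ladj (inr R0) y] ->
  [|| inr R1 \in S, ind S P0 0 | (k == 0) && (inr R5 \in S)].
Proof. nbr. Qed.
Lemma nbV2 k (S : {set Lvert k}) :
  [exists y in S, Ladj (inr R1) y] -> (inr R0 \in S) || (inr R2 \in S).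
Proof. nbr. Qed.
Lemma nbV3 k (S : {set Lvert k}) :
  [exists y in S, Ladj (inr R2) y] ->
  [|| inr R1 \in S, ind S P2 0 | (k == 0) && (inr R3 \in S)].
Proof. nbr. Qed.
Lemma nbU1 k (S : {set Lvert k}) :
  [exists y in S, Ladj (inr R3) y] ->
  [|| inr R4 \in S, ind S P1 k.-1 | (k == 0) && (inr R2 \in S)].
Proof. nbr. Qed.
Lemma nbU2 k (S : {set Lvert k}) :
  [exists y in S, Ladj (inr R4) y] -> (inr R3 \in S) || (inr R5 \in S).
Proof. nbr. Qed.
Lemma nbU3 k (S : {set Lvert k}) :
  [exists y in S, Ladj (inr R5) y] ->
  [|| inr R4 \in S, ind S P3 k.-1 | (k == 0) && (inr R0 \in S)].
Proof. nbr. Qed.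
Lemma chainX (x : nat -> nat) k : 0 < k -> (forall i, x i <= 2) ->
  (forall i, 0 < i < k -> x i = 0 -> x i.-1 = 2) ->
  k + (x k.-1 == 2) <= \sum_(i < k) x i + (x 0 == 0).
Proof.
elim: k => // k IH _ Hx Hc.
case: k IH Hc => [|k] IH Hc.
  by rewrite big_ord1 /=; have := Hx 0; lia.
rewrite big_ord_recr /=.
have H1 := IH isT Hx (fun i hi => Hc i (ltac:(lia))).
have H2 := Hx k.+1; have H3 := Hx k.
case E: (x k.+1 == 0).
  have := Hc k.+1 ltac:(lia) (eqP E) => /= H4. simpl in H1. lia.
simpl in H1; lia.
Qed.

Lemma chainY k : 0 < k -> forall (y : nat -> nat), (forall i, y i <= 2) ->
  (forall i, i.+1 < k -> y i = 0 -> y i.+1 = 2) ->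
  k + (y 0 == 2) <= \sum_(i < k) y i + (y k.-1 == 0).
Proof.
elim: k => // k IH _ y Hy Hc.
case: k IH Hc => [|k] IH Hc.
  by rewrite big_ord1 /=; have := Hy 0; lia.
rewrite big_ord_recl /=.
rewrite (eq_bigr (fun i : 'I_k.+1 => y i.+1)); last by move=> i _.
have H1 := IH isT (fun i => y i.+1) (fun i => Hy i.+1) (fun i hi => Hc i.+1 (ltac:(lia))).
simpl in H1.
have H2 := Hy 0; have H3 := Hy 1.
case E: (y 0 == 0).
  have := Hc 0 ltac:(lia) (eqP E) => /= H4. lia.
lia.
Qed.

Lemma coreComb k X Y e1 e2 e3 e4 r0 r1 r2 r3 r4 r5 :
  k + e1 <= X + e3 -> k + e2 <= Y + e4 ->
  2 * k + e1 + e2 + r0 + r1 + r2 + r3 + r4 + r5 <= X + Y + r0 + r1 + r2 + r3 + r4 + r5 + e3 + e4.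
Proof. lia. Qed.

Lemma core m (S : {set Lvert m.+1}) :
  (forall (j : 'I_m.+1) (p : 'I_4), [exists y in S, Ladj (inl (j,p)) y]) ->
  2 * m.+1 + (ind S P1 m + ind S P3 m == 2) + (ind S P0 0 + ind S P2 0 == 2)
   + (inr R0 \in S) + (inr R1 \in S) + (inr R2 \in S) + (inr R3 \in S)
   + (inr R4 \in S) + (inr R5 \in S)
  <= #|S| + (ind S P1 0 + ind S P3 0 == 0) + (ind S P0 m + ind S P2 m == 0).
Proof.
move=> Hd.
have CX : forall i, 0 < i < m.+1 ->
     ind S P1 i + ind S P3 i = 0 -> ind S P1 i.-1 + ind S P3 i.-1 = 2.
  move=> i /andP [Hi0 Hi].
  have := nbA (Hd (Ordinal Hi) P0); have := nbC (Hd (Ordinal Hi) P2); rewrite /=.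
  case: i Hi0 Hi => // i _ Hi /=. clear Hd. lia.
have CY : forall i, i.+1 < m.+1 ->
     ind S P0 i + ind S P2 i = 0 -> ind S P0 i.+1 + ind S P2 i.+1 = 2.
  move=> i Hi.
  have Hi' : i < m.+1 by lia.
  have := nbB (Hd (Ordinal Hi') P1); have := nbD (Hd (Ordinal Hi') P3); rewrite /=.
  clear Hd. lia.
have Bx : forall i, ind S P1 i + ind S P3 i <= 2 by move=> i; case: (ind S P1 i); case: (ind S P3 i).
have By : forall i, ind S P0 i + ind S P2 i <= 2 by move=> i; case: (ind S P0 i); case: (ind S P2 i).
have HX := @chainX (fun i => ind S P1 i + ind S P3 i) m.+1 isT Bx CX.
have HY := @chainY m.+1 isT (fun i => ind S P0 i + ind S P2 i) By CY.
rewrite card_dec.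
rewrite (eq_bigr (fun i : 'I_m.+1 => (ind S P1 i + ind S P3 i) + (ind S P0 i + ind S P2 i)));
  last by move=> i _; clear; lia.
rewrite big_split /=.
exact: coreComb HX HY.
Qed.

Lemma ind_out k (S : {set Lvert k}) p i : k <= i -> ind S p i = false.
Proof.
move=> Hi; apply/existsP => -[j /andP [/eqP E _]]; have := ltn_ord j; lia.
Qed.

Lemma endF m (S : {set Lvert m.+1}) :
  (forall (j : 'I_m.+1) (p : 'I_4), [exists y in S, Ladj (inl (j,p)) y]) ->
  [&& [|| ind S P1 0, ind S P3 0 | inr R0 \in S], [|| ind S P1 0, ind S P3 0 | inr R2 \in S],
      [|| ind S P0 m, ind S P2 m | inr R3 \in S] & [|| ind S P0 m, ind S P2 m | inr R5 \in S]].
Proof.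
move=> Hd.
have := nbA (Hd ord0 P0); have := nbC (Hd ord0 P2).
have := nbB (Hd ord_max P1); have := nbD (Hd ord_max P3).
rewrite /= !(@ind_out _ _ _ m.+1) //.
clear Hd. lia.
Qed.


Lemma combine k s e1 e2 e3 e4 r0 r1 r2 r3 r4 r5 c :
  2 * k + e1 + e2 + r0 + r1 + r2 + r3 + r4 + r5 <= s + e3 + e4 ->
  c + e3 <= r0 + r1 + r2 + e2 -> 2 + e4 <= r3 + r4 + r5 + e1 -> 2 * k + 2 + c <= s.
Proof. lia. Qed.

Lemma rightL (a c b d r3 r4 r5 : bool) : r4 || b -> r3 || r5 -> r4 || d ->
  [|| a, c | r3] -> [|| a, c | r5] -> 2 + (a + c == 0) <= r3 + r4 + r5 + (b + d == 2).
Proof. by case: a; case: c; case: b; case: d; case: r3; case: r4; case: r5. Qed.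

Lemma leftA (a c b d r0 r1 r2 : bool) : r1 || a -> r0 || r2 -> r1 || c ->
  [|| b, d | r0] -> [|| b, d | r2] -> 2 + (b + d == 0) <= r0 + r1 + r2 + (a + c == 2).
Proof. by case: a; case: c; case: b; case: d; case: r0; case: r1; case: r2. Qed.

Lemma leftB0 (a c b d r0 r1 r2 : bool) : ~~ r0 -> r0 || r2 -> r1 || c ->
  [|| b, d | r0] -> [|| b, d | r2] -> 1 + (b + d == 0) <= r0 + r1 + r2 + (a + c == 2).
Proof. by case: a; case: c; case: b; case: d; case: r0; case: r1; case: r2. Qed.
Lemma leftB1 (a c b d r0 r1 r2 : bool) : ~~ r1 -> r1 || a -> r1 || c ->
  [|| b, d | r0] -> [|| b, d | r2] -> 1 + (b + d == 0) <= r0 + r1 + r2 + (a + c == 2).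
Proof. by case: a; case: c; case: b; case: d; case: r0; case: r1; case: r2. Qed.
Lemma leftB2 (a c b d r0 r1 r2 : bool) : ~~ r2 -> r1 || a -> r0 || r2 ->
  [|| b, d | r0] -> [|| b, d | r2] -> 1 + (b + d == 0) <= r0 + r1 + r2 + (a + c == 2).
Proof. by case: a; case: c; case: b; case: d; case: r0; case: r1; case: r2. Qed.
Lemma leftC0 (a c b d r0 r1 r2 : bool) : r0 -> ~~ r1 -> ~~ a -> r1 || c ->
  [|| b, d | r2] -> 1 + (b + d == 0) <= r0 + r1 + r2 + (a + c == 2).
Proof. by case: a; case: c; case: b; case: d; case: r0; case: r1; case: r2. Qed.
Lemma leftC1 (a c b d r0 r1 r2 : bool) : r1 -> ~~ r0 -> ~~ r2 ->
  [|| b, d | r0] -> [|| b, d | r2] -> 1 + (b + d == 0) <= r0 + r1 + r2 + (a + c == 2).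
Proof. by case: a; case: c; case: b; case: d; case: r0; case: r1; case: r2. Qed.
Lemma leftC2 (a c b d r0 r1 r2 : bool) : r2 -> ~~ r1 -> ~~ c -> r1 || a ->
  [|| b, d | r0] -> 1 + (b + d == 0) <= r0 + r1 + r2 + (a + c == 2).
Proof. by case: a; case: c; case: b; case: d; case: r0; case: r1; case: r2. Qed.

Lemma lowA m (S : {set Lvert m.+1}) :
  (forall x, [exists y in S, Ladj x y]) -> 2 * m.+1 + 2 + 2 <= #|S|.
Proof.
move=> Hd.
have Hl : forall (j : 'I_m.+1) (p : 'I_4), [exists y in S, Ladj (inl (j,p)) y] by move=> *; apply: Hd.
have C := core Hl; case/and4P: (endF Hl) => E1 E2 E3 E4.
have V1 := nbV1 (Hd _); have V2 := nbV2 (Hd _); have V3 := nbV3 (Hd _).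
have U1 := nbU1 (Hd _); have U2 := nbU2 (Hd _); have U3 := nbU3 (Hd _).
rewrite /= ?orbF in U1 U3 V1 V3.
apply: (combine C); [exact: leftA | exact: rightL].
Qed.

Lemma ind0 (S : {set Lvert 0}) p i : ind S p i = false.
Proof. by apply: ind_out. Qed.

Lemma lowA0 (S : {set Lvert 0}) :
  (forall x, [exists y in S, Ladj x y]) -> 4 <= #|S|.
Proof.
move=> Hd.
have V1 := nbV1 (Hd _); have V2 := nbV2 (Hd _); have V3 := nbV3 (Hd _).
have U1 := nbU1 (Hd _); have U2 := nbU2 (Hd _); have U3 := nbU3 (Hd _).
rewrite !ind0 /= in V1 V3 U1 U3.
rewrite card_dec big_ord0.
move: V1 V2 V3 U1 U2 U3; clear Hd.
by case: (inr R0 \in S); case: (inr R1 \in S); case: (inr R2 \in S); case: (inr R3 \in S);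
   case: (inr R4 \in S); case: (inr R5 \in S).
Qed.

Lemma nn0 k (S : {set Lvert k}) : [forall y in S, ~~ Ladj (inr R0) y] ->
  ~~ (inr R1 \in S) && ~~ ind S P0 0.
Proof.
move/forallP => H; apply/andP; split.
  by apply/negP => yS; have := H (inr R1); rewrite yS /Ladj /= ?orbT.
apply/negP => /existsP [j /andP [/eqP E yS]]; have := H (inl (j,P0)).
by rewrite yS /Ladj /= E.
Qed.
Lemma nn1 k (S : {set Lvert k}) : [forall y in S, ~~ Ladj (inr R1) y] ->
  ~~ (inr R0 \in S) && ~~ (inr R2 \in S).
Proof.
move/forallP => H; apply/andP; split.
  by apply/negP => yS; have := H (inr R0); rewrite yS /Ladj /= ?orbT.
by apply/negP => yS; have := H (inr R2); rewrite yS /Ladj /= ?orbT.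
Qed.
Lemma nn2 k (S : {set Lvert k}) : [forall y in S, ~~ Ladj (inr R2) y] ->
  ~~ (inr R1 \in S) && ~~ ind S P2 0.
Proof.
move/forallP => H; apply/andP; split.
  by apply/negP => yS; have := H (inr R1); rewrite yS /Ladj /= ?orbT.
apply/negP => /existsP [j /andP [/eqP E yS]]; have := H (inl (j,P2)).
by rewrite yS /Ladj /= E.
Qed.


Lemma lowB0 m (S : {set Lvert m.+1}) : inr R0 \notin S ->
  (forall x, x != inr R0 -> [exists y in S, Ladj x y]) -> 2 * m.+1 + 2 + 1 <= #|S|.
Proof.
move=> Hw Hd.
have Hl : forall (j : 'I_m.+1) (p : 'I_4), [exists y in S, Ladj (inl (j,p)) y] by move=> *; apply: Hd.
have C := core Hl; case/and4P: (endF Hl) => E1 E2 E3 E4.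
have U1 := nbU1 (Hd (inr R3) isT); have U2 := nbU2 (Hd (inr R4) isT); have U3 := nbU3 (Hd (inr R5) isT).
rewrite /= ?orbF in U1 U3.
apply: (combine C); last exact: rightL.
have V2 := nbV2 (Hd (inr R1) isT); have V3 := nbV3 (Hd (inr R2) isT).
rewrite /= ?orbF in V3.
exact: leftB0.
Qed.

Lemma lowB1 m (S : {set Lvert m.+1}) : inr R1 \notin S ->
  (forall x, x != inr R1 -> [exists y in S, Ladj x y]) -> 2 * m.+1 + 2 + 1 <= #|S|.
Proof.
move=> Hw Hd.
have Hl : forall (j : 'I_m.+1) (p : 'I_4), [exists y in S, Ladj (inl (j,p)) y] by move=> *; apply: Hd.
have C := core Hl; case/and4P: (endF Hl) => E1 E2 E3 E4.
have U1 := nbU1 (Hd (inr R3) isT); have U2 := nbU2 (Hd (inr R4) isT); have U3 := nbU3 (Hd (inr R5) isT).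
rewrite /= ?orbF in U1 U3.
apply: (combine C); last exact: rightL.
have V1 := nbV1 (Hd (inr R0) isT); have V3 := nbV3 (Hd (inr R2) isT).
rewrite /= ?orbF in V1 V3.
exact: leftB1.
Qed.

Lemma lowB2 m (S : {set Lvert m.+1}) : inr R2 \notin S ->
  (forall x, x != inr R2 -> [exists y in S, Ladj x y]) -> 2 * m.+1 + 2 + 1 <= #|S|.
Proof.
move=> Hw Hd.
have Hl : forall (j : 'I_m.+1) (p : 'I_4), [exists y in S, Ladj (inl (j,p)) y] by move=> *; apply: Hd.
have C := core Hl; case/and4P: (endF Hl) => E1 E2 E3 E4.
have U1 := nbU1 (Hd (inr R3) isT); have U2 := nbU2 (Hd (inr R4) isT); have U3 := nbU3 (Hd (inr R5) isT).
rewrite /= ?orbF in U1 U3.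
apply: (combine C); last exact: rightL.
have V1 := nbV1 (Hd (inr R0) isT); have V2 := nbV2 (Hd (inr R1) isT).
rewrite /= ?orbF in V1.
exact: leftB2.
Qed.

Lemma lowC0 m (S : {set Lvert m.+1}) : inr R0 \in S ->
  (forall x, x != inr R0 -> [exists y in S, Ladj x y]) ->
  [forall y in S, ~~ Ladj (inr R0) y] -> 2 * m.+1 + 2 + 1 <= #|S|.
Proof.
move=> Hw Hd /nn0 /andP [N1 N2].
have Hl : forall (j : 'I_m.+1) (p : 'I_4), [exists y in S, Ladj (inl (j,p)) y] by move=> *; apply: Hd.
have C := core Hl; case/and4P: (endF Hl) => E1 E2 E3 E4.
have U1 := nbU1 (Hd (inr R3) isT); have U2 := nbU2 (Hd (inr R4) isT); have U3 := nbU3 (Hd (inr R5) isT).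
rewrite /= ?orbF in U1 U3.
apply: (combine C); last exact: rightL.
have V3 := nbV3 (Hd (inr R2) isT).
rewrite /= ?orbF in V3.
exact: leftC0.
Qed.

Lemma lowC1 m (S : {set Lvert m.+1}) : inr R1 \in S ->
  (forall x, x != inr R1 -> [exists y in S, Ladj x y]) ->
  [forall y in S, ~~ Ladj (inr R1) y] -> 2 * m.+1 + 2 + 1 <= #|S|.
Proof.
move=> Hw Hd /nn1 /andP [N1 N2].
have Hl : forall (j : 'I_m.+1) (p : 'I_4), [exists y in S, Ladj (inl (j,p)) y] by move=> *; apply: Hd.
have C := core Hl; case/and4P: (endF Hl) => E1 E2 E3 E4.
have U1 := nbU1 (Hd (inr R3) isT); have U2 := nbU2 (Hd (inr R4) isT); have U3 := nbU3 (Hd (inr R5) isT).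
rewrite /= ?orbF in U1 U3.
apply: (combine C); last exact: rightL.
exact: leftC1.
Qed.

Lemma lowC2 m (S : {set Lvert m.+1}) : inr R2 \in S ->
  (forall x, x != inr R2 -> [exists y in S, Ladj x y]) ->
  [forall y in S, ~~ Ladj (inr R2) y] -> 2 * m.+1 + 2 + 1 <= #|S|.
Proof.
move=> Hw Hd /nn2 /andP [N1 N2].
have Hl : forall (j : 'I_m.+1) (p : 'I_4), [exists y in S, Ladj (inl (j,p)) y] by move=> *; apply: Hd.
have C := core Hl; case/and4P: (endF Hl) => E1 E2 E3 E4.
have U1 := nbU1 (Hd (inr R3) isT); have U2 := nbU2 (Hd (inr R4) isT); have U3 := nbU3 (Hd (inr R5) isT).
rewrite /= ?orbF in U1 U3.
apply: (combine C); last exact: rightL.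
have V1 := nbV1 (Hd (inr R0) isT).
rewrite /= ?orbF in V1.
exact: leftC2.
Qed.
Definition mkS k (fl : nat -> nat -> bool) (fr : nat -> bool) : {set Lvert k} :=
  [set x : Lvert k | match x with inl (j, p) => fl j p | inr r => fr r end].

Ltac wit y := apply/existsP; exists y; by rewrite !inE /Ladj /= ?eqxx /= ?orbT ?andbT.

Ltac domr k :=
  first [ wit (inl (@ord0 _,P0) : Lvert k) | wit (inl (@ord0 _,P2) : Lvert k)
        | wit (inr R0 : Lvert k) | wit (inr R1 : Lvert k) | wit (inr R2 : Lvert k)
        | wit (inr R4 : Lvert k) | wit (inr R5 : Lvert k) ].
Ltac doml k j :=
  first [ wit (inl (j,P0) : Lvert k) | wit (inl (j,P1) : Lvert k) | wit (inl (j,P2) : Lvert k) | wit (inl (j,P3) : Lvert k) ].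
Ltac domt k := let j := fresh "j" in let p := fresh "p" in let r := fresh "r" in
  case=> [[j p]|r]; [case: (ord4P p) => ->; doml k j | case: (ord6P r) => [->|[->|[->|[->|[->|->]]]]]; domr k].

Lemma card_mkS k fl fr : #|mkS k fl fr| =
  \sum_(i < k) (fl i 0 + fl i 1 + fl i 2 + fl i 3) + fr 0 + fr 1 + fr 2 + fr 3 + fr 4 + fr 5.
Proof.
rewrite card_dec !inE /=; congr (_ + _ + _ + _ + _ + _ + _).
by apply: eq_bigr => i _; rewrite !indE !inE.
Qed.

Lemma sum_const k c : \sum_(i < k) c = k * c.
Proof. by rewrite sum_nat_const card_ord. Qed.

Definition SA k := mkS k (fun _ p => (p == 0) || (p == 1)) (fun r => [|| r == 1, r == 2, r == 4 | r == 5]).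
Definition TB0 k := mkS k (fun _ p => (p == 1) || (p == 2)) (fun r => [|| r == 2, r == 4 | r == 5]).
Definition TB1 k := mkS k (fun j p => [|| p == 0, p == 1 | (p == 2) && (j == 0)]) (fun r => (r == 4) || (r == 5)).
Definition TB2 k := mkS k (fun _ p => (p == 0) || (p == 1)) (fun r => [|| r == 0, r == 4 | r == 5]).
Definition TC0 k := mkS k (fun _ p => (p == 1) || (p == 2)) (fun r => [|| r == 0, r == 4 | r == 5]).
Definition TC1 k := mkS k (fun _ p => (p == 0) || (p == 1)) (fun r => [|| r == 1, r == 4 | r == 5]).
Definition TC2 k := mkS k (fun _ p => (p == 0) || (p == 1)) (fun r => [|| r == 2, r == 4 | r == 5]).

Lemma cSA k : #|SA k| = 2 * k + 2 + 2.
Proof. by rewrite card_mkS /= sum_const; lia. Qed.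
Lemma cTB0 k : #|TB0 k| = 2 * k + 2 + 1.
Proof. by rewrite card_mkS /= sum_const; lia. Qed.
Lemma cTB2 k : #|TB2 k| = 2 * k + 2 + 1.
Proof. by rewrite card_mkS /= sum_const; lia. Qed.
Lemma cTC0 k : #|TC0 k| = 2 * k + 2 + 1.
Proof. by rewrite card_mkS /= sum_const; lia. Qed.
Lemma cTC1 k : #|TC1 k| = 2 * k + 2 + 1.
Proof. by rewrite card_mkS /= sum_const; lia. Qed.
Lemma cTC2 k : #|TC2 k| = 2 * k + 2 + 1.
Proof. by rewrite card_mkS /= sum_const; lia. Qed.
Lemma cTB1 m : #|TB1 m.+1| = 2 * m.+1 + 2 + 1.
Proof.
rewrite card_mkS /= big_ord_recl /=.
rewrite (eq_bigr (fun _ => 2)); last by move=> i _.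
rewrite sum_const; lia.
Qed.

Ltac domt2 k := let j := fresh "j" in let p := fresh "p" in let r := fresh "r" in
  let Hx := fresh "Hx" in
  case=> [[j p]|r]; [case: (ord4P p) => ->; move=> _; doml k j
   | case: (ord6P r) => [->|[->|[->|[->|[->|->]]]]]; move=> Hx; first [by rewrite ?inE eqxx in Hx | domr k]].

Ltac nadj := let j := fresh "j" in let p := fresh "p" in let r := fresh "r" in
  apply/forallP; case=> [[j p]|r]; apply/implyP; rewrite !inE;
  [case: (ord4P p) => -> | case: (ord6P r) => [->|[->|[->|[->|[->|->]]]]]]; rewrite /Ladj /=; lia.

Ltac subt := let j := fresh "j" in let p := fresh "p" in let r := fresh "r" in
  apply/subsetP; case=> [[j p]|r]; rewrite !inE //;
  case: (ord6P r) => [->|[->|[->|[->|[->|->]]]]]; by [].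

Lemma tdA k : is_TD_in (@Ladj k) [set: Lvert k] (SA k).
Proof. apply/andP; split; first exact: subsetT. apply/forallP => x; apply/implyP; move: x; domt2 k. Qed.
Lemma tdB0 m : is_TD_in (@Ladj m.+1) [set~ inr R0] (TB0 m.+1).
Proof. apply/andP; split; first subt. apply/forallP => x; apply/implyP; move: x; domt2 m.+1. Qed.
Lemma tdB1 m : is_TD_in (@Ladj m.+1) [set~ inr R1] (TB1 m.+1).
Proof. apply/andP; split; first subt. apply/forallP => x; apply/implyP; move: x; domt2 m.+1. Qed.
Lemma tdB2 m : is_TD_in (@Ladj m.+1) [set~ inr R2] (TB2 m.+1).
Proof. apply/andP; split; first subt. apply/forallP => x; apply/implyP; move: x; domt2 m.+1. Qed.
Lemma atC0 m : is_ATD (@Ladj m.+1) (inr R0) (TC0 m.+1).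
Proof. apply/and3P; split; first by rewrite inE. apply/forallP => x; apply/implyP; move: x; domt2 m.+1. nadj. Qed.
Lemma atC1 m : is_ATD (@Ladj m.+1) (inr R1) (TC1 m.+1).
Proof. apply/and3P; split; first by rewrite inE. apply/forallP => x; apply/implyP; move: x; domt2 m.+1. nadj. Qed.
Lemma atC2 m : is_ATD (@Ladj m.+1) (inr R2) (TC2 m.+1).
Proof. apply/and3P; split; first by rewrite inE. apply/forallP => x; apply/implyP; move: x; domt2 m.+1. nadj. Qed.

Lemma card_L k : #|Lvert k| = 4 * k + 6.
Proof. rewrite /Lvert card_sum card_prod !card_ord; lia. Qed.

Notation J0 := (@Ordinal 3 0 isT).
Notation J1 := (@Ordinal 3 1 isT).
Notation J2 := (@Ordinal 3 2 isT).

Lemma ord3P (q : 'I_3) : [\/ q = J0, q = J1 | q = J2].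
Proof.
case: q => [[|[|[|q]]] Hq] //; [apply: Or31|apply: Or32|apply: Or33]; exact: val_inj.
Qed.

Lemma lowB_gen m (S : {set Lvert m.+1}) (w : 'I_6) :
  is_TD_in (@Ladj m.+1) [set~ inr w] S ->
  inr w \notin S /\ (forall x, x != inr w -> [exists y in S, Ladj x y]).
Proof.
case/andP => Hs /forallP H; split.
  by apply/negP => /(subsetP Hs); rewrite in_setC1 eqxx.
by move=> x Hx; have := H x; rewrite in_setC1 Hx.
Qed.

Lemma lowC_gen m (S : {set Lvert m.+1}) (w : 'I_6) :
  is_ATD (@Ladj m.+1) (inr w) S ->
  [/\ inr w \in S, (forall x, x != inr w -> [exists y in S, Ladj x y]) &
    [forall y in S, ~~ Ladj (inr w) y]].
Proof.
case/and3P => H1 /forallP H2 H3; split => // x Hx; exact: implyP (H2 x) Hx.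
Qed.

Theorem mainTheorem4 (k : nat) :
  let n := #|Lvert k| in
  gamma_t (@Ladj k) = (n + 2) %/ 2 /\
  (1 <= k -> forall j : 'I_3,
     gamma_t_in (@Ladj k) [set~ Lv k j] = n %/ 2 /\
     gamma_ta (@Ladj k) (Lv k j) = n %/ 2).
Proof.
move=> n; rewrite /n card_L; clear n; split.
  rewrite /gamma_t /gamma_t_in.
  have -> : (4 * k + 6 + 2) %/ 2 = 2 * k + 2 + 2 by lia.
  case: k => [|m].
    apply: (bigmin_eq (s0 := SA 0)); [exact: tdA | by rewrite cSA | by rewrite card_L; lia |].
    move=> S /andP [_ /forallP H]; apply: lowA0 => x; exact: implyP (H x) (in_setT x).
  apply: (bigmin_eq (s0 := SA m.+1)); [exact: tdA | by rewrite cSA | by rewrite card_L; lia |].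
  move=> S /andP [_ /forallP H]; apply: lowA => x; exact: implyP (H x) (in_setT x).
case: k => // m _ j.
have -> : (4 * m.+1 + 6) %/ 2 = 2 * m.+1 + 2 + 1 by lia.
rewrite /gamma_t_in /gamma_ta.
case: (ord3P j) => ->.
- have -> : Lv m.+1 J0 = inr R0 by congr inr; apply: val_inj.
  split.
    apply: (bigmin_eq (s0 := TB0 m.+1)); [exact: tdB0 | exact: cTB0 | by rewrite card_L; lia |].
    by move=> S /lowB_gen [H1 H2]; apply: lowB0.
  apply: (bigmin_eq (s0 := TC0 m.+1)); [exact: atC0 | exact: cTC0 | by rewrite card_L; lia |].
  by move=> S /lowC_gen [H1 H2 H3]; apply: lowC0.
- have -> : Lv m.+1 J1 = inr R1 by congr inr; apply: val_inj.
  split.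
    apply: (bigmin_eq (s0 := TB1 m.+1)); [exact: tdB1 | exact: cTB1 | by rewrite card_L; lia |].
    by move=> S /lowB_gen [H1 H2]; apply: lowB1.
  apply: (bigmin_eq (s0 := TC1 m.+1)); [exact: atC1 | exact: cTC1 | by rewrite card_L; lia |].
  by move=> S /lowC_gen [H1 H2 H3]; apply: lowC1.
- have -> : Lv m.+1 J2 = inr R2 by congr inr; apply: val_inj.
  split.
    apply: (bigmin_eq (s0 := TB2 m.+1)); [exact: tdB2 | exact: cTB2 | by rewrite card_L; lia |].
    by move=> S /lowB_gen [H1 H2]; apply: lowB2.
  apply: (bigmin_eq (s0 := TC2 m.+1)); [exact: atC2 | exact: cTC2 | by rewrite card_L; lia |].
  by move=> S /lowC_gen [H1 H2 H3]; apply: lowC2.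
Qed.
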